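(* Let $k$ be a positive integer, $a\ge k+2$ an integer and $G=K_a\,\square\,K_a$. Then $\gamma_{P,k}(G-e)=a-k-1$ for every edge $e$ of $G$.
   Context: $K_a$ is the complete graph on $a$ vertices, $\square$ denotes the Cartesian product of graphs, and $G-e$ is obtained by deleting the edge $e$. $N_G[v]$ is the closed neighbourhood of $v$, and $N_G[S]$ the union of closed neighbourhoods of vertices of $S$. For $S\subseteq V(G)$, define $\mathcal{P}^{0}_{G,k}(S)=N_G[S]$ and $\mathcal{P}^{i+1}_{G,k}(S)=\bigcup\{N_G[v] : v\in \mathcal{P}^{i}_{G,k}(S),\ |N_G[v]\setminus \mathcal{P}^{i}_{G,k}(S)|\le k\}$; these increase and stabilize to $\mathcal{P}^{\infty}_{G,k}(S)$. $S$ is a $k$-power dominating set if $\mathcal{P}^{\infty}_{G,k}(S)=V(G)$; $\gamma_{P,k}(G)$ is the minimum size of such a set. *)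

(* Defs.v *)
(* Simple graphs as symmetric irreflexive relations on a finType. *)
From mathcomp Require Import all_boot.
Set Implicit Arguments. Unset Strict Implicit. Unset Printing Implicit Defensive.

Section Graphs.
Variable T : finType.

Definition cnbhd (g : rel T) (v : T) : {set T} := [set w | (w == v) || g v w].

Definition cnbhd_set (g : rel T) (S : {set T}) : {set T} :=
  \bigcup_(v in S) cnbhd g v.

Definition pstep (g : rel T) (k : nat) (P : {set T}) : {set T} :=
  \bigcup_(v in P | #|cnbhd g v :\: P| <= k) cnbhd g v.

Definition pobs (g : rel T) (k : nat) (S : {set T}) (i : nat) : {set T} :=
  iter i (pstep g k) (cnbhd_set g S).

(* S is k-power dominating: P^infty = V, i.e. some (increasing) stage is V *)
Definition k_power_dominating (g : rel T) (k : nat) (S : {set T}) : Prop :=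
  exists i, pobs g k S i = [set: T].

Definition is_k_power_domination_number (g : rel T) (k n : nat) : Prop :=
  (exists S : {set T}, k_power_dominating g k S /\ #|S| = n) /\
  (forall S : {set T}, k_power_dominating g k S -> n <= #|S|).

Definition del_edge (g : rel T) (u v : T) : rel T :=
  [rel x y | g x y && ~~ (((x == u) && (y == v)) || ((x == v) && (y == u)))].

End Graphs.

Definition complete_graph (a : nat) : rel 'I_a := [rel x y | x != y].
Arguments complete_graph a : clear implicits.

Definition cart_prod (T1 T2 : finType) (g1 : rel T1) (g2 : rel T2) : rel (T1 * T2)%type :=
  [rel x y | ((x.1 == y.1) && g2 x.2 y.2) || ((x.2 == y.2) && g1 x.1 y.1)].

Definition rook_graph (a : nat) : rel ('I_a * 'I_a)%type :=
  cart_prod (complete_graph a) (complete_graph a).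
Arguments rook_graph a : clear implicits.

(* Main.v *)
Require Import Defs.
From mathcomp Require Import all_boot all_fingroup zify.
Set Implicit Arguments. Unset Strict Implicit. Unset Printing Implicit Defensive.

Section Gen.
Variable T : finType.
Variables (g : rel T) (k : nat).

Lemma pstep_mono (P Q : {set T}) : P \subset Q -> pstep g k P \subset pstep g k Q.
Proof.
move=> PQ; apply/subsetP => w /bigcupP [v /andP [vP hv] wv].
apply/bigcupP; exists v => //; rewrite (subsetP PQ) //=.
by apply: leq_trans hv; apply: subset_leq_card; apply: setDS.
Qed.

Lemma pobs_incr S i : pobs g k S i \subset pobs g k S i.+1.
Proof.
elim: i => [|i IH].
  rewrite /pobs /=; apply/subsetP => w; rewrite /cnbhd_set => /bigcupP [s sS ws].
  apply/bigcupP; exists s => //.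
  have -> : cnbhd g s :\: \bigcup_(v in S) cnbhd g v = set0.
    apply/eqP; rewrite setD_eq0; apply/subsetP => z zs.
    by apply/bigcupP; exists s.
  rewrite cards0 andbT.
  by apply/bigcupP; exists s => //; rewrite inE eqxx.
rewrite /pobs /=; exact: pstep_mono.
Qed.

Lemma pobs_mono S i j : i <= j -> pobs g k S i \subset pobs g k S j.
Proof.
move=> /subnK <-; elim: (j - i) => [|d IH] //=.
by apply: subset_trans IH (pobs_incr _ _).
Qed.

Lemma force S i (P : {set T}) v : P \subset pobs g k S i -> v \in P ->
  #|cnbhd g v :\: P| <= k -> cnbhd g v \subset pobs g k S i.+1.
Proof.
move=> PS vP hv; apply/subsetP => w wv.
rewrite /pobs iterS; apply/bigcupP; exists v => //.
rewrite (subsetP PS) //=; apply: leq_trans hv.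
by apply: subset_leq_card; apply: setDS.
Qed.
End Gen.

Section Iso.
Variable T : finType.
Variables (f h : T -> T) (fK : cancel f h) (hK : cancel h f).
Variables (g g' : rel T) (k : nat).
Hypothesis hg : forall x y, g' x y = g (f x) (f y).

Lemma mem_imsetC (X : {set T}) w : (w \in f @: X) = (h w \in X).
Proof.
apply/imsetP/idP => [[x xX ->]|hw]; first by rewrite fK.
by exists (h w) => //; rewrite hK.
Qed.

Lemma cn_iso v : cnbhd g (f v) = f @: cnbhd g' v.
Proof.
apply/setP => w; rewrite mem_imsetC !inE hg hK.
by rewrite (can2_eq hK fK).
Qed.

Lemma pstep_iso (P : {set T}) : pstep g k (f @: P) = f @: pstep g' k P.
Proof.
have cardE v : #|cnbhd g (f v) :\: f @: P| = #|cnbhd g' v :\: P|.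
  rewrite -[RHS](card_imset _ (can_inj fK)); apply: eq_card => w.
  by rewrite !inE !mem_imsetC !inE hg hK (can2_eq hK fK).
apply/setP => w; rewrite mem_imsetC; apply/bigcupP/bigcupP.
  move=> [v /andP [vP hv] wv]; exists (h v).
    by rewrite -mem_imsetC vP /= -cardE hK.
  by rewrite -mem_imsetC -cn_iso hK.
move=> [v /andP [vP hv] wv]; exists (f v).
  by rewrite mem_imsetC fK vP /= cardE.
by rewrite cn_iso mem_imsetC.
Qed.

Lemma pobs_iso (S : {set T}) i : pobs g k (f @: S) i = f @: pobs g' k S i.
Proof.
elim: i => [|i IH].
  apply/setP => w; rewrite /pobs /= mem_imsetC; apply/bigcupP/bigcupP.
    move=> [v vS wv]; exists (h v); first by rewrite -mem_imsetC.
    by rewrite -mem_imsetC -cn_iso hK.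
  move=> [v vS wv]; exists (f v); first by rewrite mem_imsetC fK.
  by rewrite cn_iso mem_imsetC.
by rewrite /pobs !iterS -/(pobs _ _ _ i) IH pstep_iso.
Qed.

Lemma kpd_iso (S : {set T}) : k_power_dominating g' k S -> k_power_dominating g k (f @: S).
Proof.
move=> [i hi]; exists i; rewrite pobs_iso hi.
by apply/setP => w; rewrite mem_imsetC !inE.
Qed.
End Iso.

Lemma card_le_U1 (T : finType) (D X : {set T}) o : D \subset X :|: [set o] -> #|D| <= #|X| + 1.
Proof.
move=> DX; apply: leq_trans (subset_leq_card DX) _.
by rewrite cardsU cards1 leq_subr.
Qed.

Section Lower.
Variables (a k : nat) (u v : ('I_a * 'I_a)%type).
Hypothesis huv : rook_graph a u v.
Let g := del_edge (rook_graph a) u v.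

Lemma rookE (x y : ('I_a * 'I_a)%type) :
  rook_graph a x y = ((x.1 == y.1) && (x.2 != y.2)) || ((x.2 == y.2) && (x.1 != y.1)).
Proof. by rewrite /rook_graph /cart_prod /complete_graph /=. Qed.

Lemma uneqv : u != v.
Proof. by move: huv; rewrite rookE; apply: contraTneq => ->; rewrite !eqxx. Qed.

End Lower.
Section L2.
Variables (a k : nat) (u v : ('I_a * 'I_a)%type).
Hypothesis huv : rook_graph a u v.
Let g := del_edge (rook_graph a) u v.
Lemma cn_line (w z : ('I_a * 'I_a)%type) : ((z.1 == w.1) || (z.2 == w.2)) ->
  z \in cnbhd g w \/ z = (if w == u then v else u).
Proof.
move=> hz; rewrite inE /g /del_edge /= rookE.
case: (boolP (z == w)) => [zw|zw]; first by left.
have hr : ((w.1 == z.1) && (w.2 != z.2)) || ((w.2 == z.2) && (w.1 != z.1)).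
  move: zw hz; case: z => z1 z2; case: w => w1 w2 /=.
  rewrite xpair_eqE.
  rewrite [w1 == _]eq_sym [w2 == _]eq_sym.
  by case: (z1 == w1); case: (z2 == w2).
rewrite hr /=.
case: (boolP (((w == u) && (z == v)) || ((w == v) && (z == u)))) => hd; last by left.
right; case/orP: hd => /andP [/eqP -> /eqP ->]; first by rewrite eqxx.
by rewrite eq_sym (negbTE (uneqv huv)).
Qed.

Lemma cn_sub (w z : ('I_a * 'I_a)%type) : z \in cnbhd g w -> (z.1 == w.1) || (z.2 == w.2).
Proof.
rewrite inE /g /del_edge /= rookE.
case: (eqVneq z w) => [->|_]; first by rewrite !eqxx.
by case/andP => /orP [/andP [/eqP -> _]|/andP [/eqP -> _]] _; rewrite eqxx ?orbT.
Qed.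

Lemma lower S : k_power_dominating g k S -> a - k - 1 <= #|S|.
Proof.
move=> [i hi]; rewrite leqNgt; apply/negP => hS.
set R := [set s.1 | s in S]; set C := [set s.2 | s in S].
set U := [set w : 'I_a * 'I_a | (w.1 \in R) || (w.2 \in C)].
have cR : #|R| <= #|S| := leq_imset_card _ _.
have cC : #|C| <= #|S| := leq_imset_card _ _.
have cRc : k + 2 <= #|~: R|.
  by have := cardsC R; rewrite card_ord; lia.
have cCc : k + 2 <= #|~: C|.
  by have := cardsC C; rewrite card_ord; lia.
have inv : forall j, pobs g k S j \subset U.
  elim => [|j IH].
    apply/subsetP => w /bigcupP [s sS ws]; rewrite inE.
    case/orP: (cn_sub ws) => /eqP ->.
      by rewrite (imset_f (fun s => s.1) sS).
    by rewrite (imset_f (fun s => s.2) sS) orbT.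
  rewrite /pobs /=; apply/subsetP => z /bigcupP [w /andP [wP hw] zw].
  have wU := subsetP IH w wP; rewrite inE in wU.
  case: (boolP ((w.1 \in R) && (w.2 \in C))) => [/andP [w1R w2C]|hn].
    by rewrite inE; case/orP: (cn_sub zw) => /eqP ->; rewrite ?w1R ?w2C ?orbT.
  exfalso; case/nandP: hn => hn.
    pose D := [set (w.1, c) | c in ~: C].
    have hD : #|D| <= #|cnbhd g w :\: pobs g k S j| + 1.
      apply: (@card_le_U1 _ _ _ (if w == u then v else u)).
      apply/subsetP => z' /imsetP [c hc ->].
      case: (@cn_line w (w.1, c)) => [/=|hin|->]; rewrite ?eqxx //.
        rewrite in_setU in_setD hin andbT; apply/orP; left; apply/negP => /(subsetP IH); rewrite inE /= (negbTE hn) /=.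
        by rewrite inE in hc; apply/negP.
      by rewrite !inE eqxx orbT.
    have eD : #|D| = #|~: C| by apply: card_imset => c1 c2 [].
    by move: hw; rewrite /pobs -/(pobs g k S j); lia.
  have w1R : w.1 \in R by move: wU; rewrite (negbTE hn) orbF.
  pose D := [set (r, w.2) | r in ~: R].
  have hD : #|D| <= #|cnbhd g w :\: pobs g k S j| + 1.
    apply: (@card_le_U1 _ _ _ (if w == u then v else u)).
    apply/subsetP => z' /imsetP [r hr ->].
    case: (@cn_line w (r, w.2)) => [/=|hin|->]; rewrite ?eqxx ?orbT //.
      rewrite in_setU in_setD hin andbT; apply/orP; left; apply/negP => /(subsetP IH); rewrite inE /= (negbTE hn) orbF.
      by rewrite inE in hr; apply/negP.
    by rewrite !inE eqxx orbT.
  have eD : #|D| = #|~: R| by apply: card_imset => c1 c2 [].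
  by move: hw; rewrite /pobs -/(pobs g k S j); lia.
have [r hr] : exists r, r \in ~: R.
  by apply/set0Pn; rewrite -card_gt0; lia.
have [c hc] : exists c, c \in ~: C.
  by apply/set0Pn; rewrite -card_gt0; lia.
have := subsetP (inv i) (r, c); rewrite hi inE => /(_ isT).
by rewrite inE /=; rewrite !inE in hr hc; rewrite (negbTE hr) (negbTE hc).
Qed.
End L2.

Section Canon.
Variables (n k : nat).
Hypotheses (hk : 0 < k) (ha : k + 2 <= n.+1).
Local Notation V := ('I_n.+1 * 'I_n.+1)%type.
Definition u0 : V := (ord0, ord_max).
Definition v0 : V := (ord_max, ord_max).
Let g := del_edge (rook_graph n.+1) u0 v0.

Lemma in_cn (w z : V) : z \in cnbhd g w =
  ((nat_of_ord z.1 == nat_of_ord w.1) || (nat_of_ord z.2 == nat_of_ord w.2)) &&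
  ~~ [&& nat_of_ord w.1 == 0, nat_of_ord w.2 == n, nat_of_ord z.1 == n & nat_of_ord z.2 == n] &&
  ~~ [&& nat_of_ord w.1 == n, nat_of_ord w.2 == n, nat_of_ord z.1 == 0 & nat_of_ord z.2 == n].
Proof.
case: w => w1 w2; case: z => z1 z2.
rewrite inE /g /del_edge /= rookE /u0 /v0 /= !xpair_eqE -!val_eqE /=.
lia.
Qed.

Lemma pairE (y : V) (p q : 'I_n.+1) : nat_of_ord y.1 = nat_of_ord p -> nat_of_ord y.2 = nat_of_ord q -> y = (p, q).
Proof. by case: y => y1 y2 /= h1 h2; congr pair; apply: val_inj. Qed.

Lemma card_col c lo hi : c < n.+1 ->
  #|[set z : V | (nat_of_ord z.2 == c) && (lo <= nat_of_ord z.1 < hi)]| <= hi - lo.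
Proof.
move=> hc.
apply: leq_trans (_ : #|[set (inord (lo + nat_of_ord t), inord c) | t : 'I_(hi - lo)]| <= _).
  apply: subset_leq_card; apply/subsetP => [[z1 z2]]; rewrite inE /= => /andP [/eqP e /andP [h1 h2]].
  have ht : nat_of_ord z1 - lo < hi - lo by lia.
  apply/imsetP; exists (Ordinal ht) => //=.
  by move: (ltn_ord z1) (ltn_ord z2) => ? ?; apply: pairE; rewrite /= inordK; lia.
by apply: leq_trans (leq_imset_card _ _) _; rewrite card_ord.
Qed.

Lemma card_row c lo hi : c < n.+1 ->
  #|[set z : V | (nat_of_ord z.1 == c) && (lo <= nat_of_ord z.2 < hi)]| <= hi - lo.
Proof.
move=> hc.
apply: leq_trans (_ : #|[set (inord c, inord (lo + nat_of_ord t)) | t : 'I_(hi - lo)]| <= _).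
  apply: subset_leq_card; apply/subsetP => [[z1 z2]]; rewrite inE /= => /andP [/eqP e /andP [h1 h2]].
  have ht : nat_of_ord z2 - lo < hi - lo by lia.
  apply/imsetP; exists (Ordinal ht) => //=.
  by move: (ltn_ord z1) (ltn_ord z2) => ? ?; apply: pairE; rewrite /= inordK; lia.
by apply: leq_trans (leq_imset_card _ _) _; rewrite card_ord.
Qed.

Lemma hm : n - k <= n.+1. Proof. lia. Qed.
Definition S0 : {set V} := [set (widen_ord hm t, widen_ord hm t) | t : 'I_(n - k)].

Lemma card_S0 : #|S0| = n.+1 - k - 1.
Proof.
rewrite card_imset ?card_ord; first lia.
by move=> t1 t2 [] e _; apply: val_inj.
Qed.

Lemma st0 : [set z : V | (nat_of_ord z.1 < n - k) || (nat_of_ord z.2 < n - k)] \subset pobs g k S0 0.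
Proof.
apply/subsetP => -[z1 z2]; rewrite inE /= => /orP [h|h]; rewrite /pobs /=; apply/bigcupP.
  exists (widen_ord hm (Ordinal h), widen_ord hm (Ordinal h)); first by apply: imset_f.
  rewrite in_cn /=; lia.
exists (widen_ord hm (Ordinal h), widen_ord hm (Ordinal h)); first by apply: imset_f.
rewrite in_cn /=; lia.
Qed.

Lemma st1 : [set z : V | (nat_of_ord z.1 < n - k) || (nat_of_ord z.2 < n - k) ||
   ((nat_of_ord z.2 == n) && (nat_of_ord z.1 != n))] \subset pobs g k S0 1.
Proof.
have H1 : cnbhd g u0 \subset pobs g k S0 1.
  apply: force st0 _ _; first by rewrite inE /u0 /=; lia.
  have : cnbhd g u0 :\: [set z : V | (nat_of_ord z.1 < n - k) || (nat_of_ord z.2 < n - k)]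
     \subset [set z : V | (nat_of_ord z.2 == n) && (n - k <= nat_of_ord z.1 < n)].
    apply/subsetP => -[z1 z2]; move: (ltn_ord z1) (ltn_ord z2); rewrite in_setD in_cn !inE /u0 /v0 /=; lia.
  move/subset_leq_card/leq_trans; apply; apply: leq_trans (card_col _ _ _) _; lia.
apply/subsetP => -[z1 z2] hz.
case: (boolP ((z1, z2) \in [set z : V | (nat_of_ord z.1 < n - k) || (nat_of_ord z.2 < n - k)])) => h.
  by apply: (subsetP (pobs_incr g k S0 0)); apply: (subsetP st0).
apply: (subsetP H1); rewrite in_cn /u0 /=; move: hz h; rewrite !inE /=; lia.
Qed.

Lemma st2 : [set z : V | (nat_of_ord z.1 != n) || (nat_of_ord z.2 < n - k)] \subset pobs g k S0 2.
Proof.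
apply/subsetP => -[z1 z2] hz.
case: (boolP ((z1, z2) \in [set z : V | (nat_of_ord z.1 < n - k) || (nat_of_ord z.2 < n - k) ||
   ((nat_of_ord z.2 == n) && (nat_of_ord z.1 != n))])) => h.
  by apply: (subsetP (pobs_incr g k S0 1)); apply: (subsetP st1).
move: (ltn_ord z1) (ltn_ord z2) => b1 b2.
have Hv : cnbhd g (z1, ord0) \subset pobs g k S0 2.
  apply: force st1 _ _; first by move: hz h; rewrite !inE /=; lia.
  have : cnbhd g (z1, ord0) :\: [set z : V | (nat_of_ord z.1 < n - k) || (nat_of_ord z.2 < n - k) ||
   ((nat_of_ord z.2 == n) && (nat_of_ord z.1 != n))]
     \subset [set z : V | (nat_of_ord z.1 == z1) && (n - k <= nat_of_ord z.2 < n)].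
    apply/subsetP => -[y1 y2]; move: (ltn_ord y1) (ltn_ord y2) hz h; rewrite in_setD in_cn !inE /=; lia.
  move/subset_leq_card/leq_trans; apply; apply: leq_trans (card_row _ _ _) _; lia.
apply: (subsetP Hv); rewrite in_cn /=; move: hz h; rewrite !inE /=; lia.
Qed.

Lemma st3 : [set z : V | (nat_of_ord z.1 != n) || (nat_of_ord z.2 != n)] \subset pobs g k S0 3.
Proof.
apply/subsetP => -[z1 z2] hz.
case: (boolP ((z1, z2) \in [set z : V | (nat_of_ord z.1 != n) || (nat_of_ord z.2 < n - k)])) => h.
  by apply: (subsetP (pobs_incr g k S0 2)); apply: (subsetP st2).
move: (ltn_ord z1) (ltn_ord z2) => b1 b2.
have Hv : cnbhd g (ord0, z2) \subset pobs g k S0 3.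
  apply: force st2 _ _; first by rewrite !inE /=; lia.
  have : cnbhd g (ord0, z2) :\: [set z : V | (nat_of_ord z.1 != n) || (nat_of_ord z.2 < n - k)]
     \subset [set (ord_max, z2)].
    apply/subsetP => -[y1 y2]; move: (ltn_ord y1) (ltn_ord y2) hz h.
    rewrite in_setD in_cn !inE /= xpair_eqE -!val_eqE /=; lia.
  move/subset_leq_card; rewrite cards1 => H; lia.
apply: (subsetP Hv); rewrite in_cn /=; move: hz h; rewrite !inE /=; lia.
Qed.

Lemma st4 : [set: V] \subset pobs g k S0 4.
Proof.
apply/subsetP => -[z1 z2] _.
case: (boolP ((z1, z2) \in [set z : V | (nat_of_ord z.1 != n) || (nat_of_ord z.2 != n)])) => h.
  by apply: (subsetP (pobs_incr g k S0 3)); apply: (subsetP st3).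
move: (ltn_ord z1) (ltn_ord z2) => b1 b2.
have Hv : cnbhd g (ord_max, ord0) \subset pobs g k S0 4.
  apply: force st3 _ _; first by rewrite !inE /=; lia.
  have : cnbhd g (ord_max, ord0) :\: [set z : V | (nat_of_ord z.1 != n) || (nat_of_ord z.2 != n)]
     \subset [set (ord_max, ord_max)].
    apply/subsetP => -[y1 y2]; move: (ltn_ord y1) (ltn_ord y2) h.
    rewrite in_setD in_cn !inE /= xpair_eqE -!val_eqE /=; lia.
  move/subset_leq_card; rewrite cards1 => H; lia.
apply: (subsetP Hv); rewrite in_cn /=; move: h; rewrite !inE /=; lia.
Qed.

Lemma canon : k_power_dominating g k S0 /\ #|S0| = n.+1 - k - 1.
Proof.
split; last exact: card_S0.
by exists 4; apply/eqP; rewrite eqEsubset subsetT st4.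
Qed.
End Canon.

Lemma perm2 (n : nat) (i x : 'I_n.+1) : i != x -> 0 < n ->
  exists r : {perm 'I_n.+1}, r ord0 = i /\ r ord_max = x.
Proof.
move=> ix n0; pose s := tperm (@ord0 n) i; pose z := s x.
have e : tperm ord_max z ord0 = ord0.
  apply: tpermD.
    by apply/eqP => /(congr1 val) /=; lia.
  rewrite /z (can2_eq (tpermK _ _) (tpermK _ _)) tpermL.
  by rewrite eq_sym.
exists (tperm ord_max z * s)%g; rewrite !permM; split.
  by rewrite e /s tpermL.
by rewrite tpermL /z tpermK.
Qed.

Lemma transport n k (hk : 0 < k) (ha : k + 2 <= n.+1) (u v : ('I_n.+1 * 'I_n.+1)%type)
  (f h : ('I_n.+1 * 'I_n.+1) -> ('I_n.+1 * 'I_n.+1)) (fK : cancel f h) (hK : cancel h f)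
  (fr : forall x y, rook_graph n.+1 (f x) (f y) = rook_graph n.+1 x y)
  (fu : f (u0 n) = u) (fv : f (v0 n) = v) :
  exists S, k_power_dominating (del_edge (rook_graph n.+1) u v) k S /\ #|S| = n.+1 - k - 1.
Proof.
have [kp cS] := canon hk ha.
exists (f @: S0 hk ha); split; last by rewrite card_imset ?cS //; exact: can_inj fK.
apply: (kpd_iso fK hK _ kp) => x y.
rewrite /del_edge /= fr -fu -fv !(inj_eq (can_inj fK)).
by [].
Qed.

Theorem mainTheorem7 (k a : nat) (hk : 0 < k) (ha : k + 2 <= a)
    (u v : ('I_a * 'I_a)%type) (huv : rook_graph a u v) :
  is_k_power_domination_number (del_edge (rook_graph a) u v) k (a - k - 1).
Proof.
split; last by move=> S; exact: (lower huv).
move: ha u v huv; case: a => [|n] ha u v huv; first lia.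
have n0 : 0 < n by lia.
have huv' := huv; rewrite rookE in huv'.
case/orP: huv' => /andP [/eqP e ne].
  have [r [r0 rm]] := perm2 ne n0.
  pose c := tperm ord_max u.1.
  apply: (@transport n k hk ha u v (fun x => (c x.2, r x.1)) (fun x => ((r^-1)%g x.2, (c^-1)%g x.1))).
  - by move=> [x1 x2] /=; rewrite !permK.
  - by move=> [x1 x2] /=; rewrite !permKV.
  - by move=> [x1 x2] [y1 y2]; rewrite !rookE /= !(inj_eq perm_inj) orbC.
  - by rewrite /u0 /= r0 /c tpermL; case: (u).
  - by rewrite /v0 /= rm /c tpermL e; case: (v).
have [r [r0 rm]] := perm2 ne n0.
pose c := tperm ord_max u.2.
apply: (@transport n k hk ha u v (fun x => (r x.1, c x.2)) (fun x => ((r^-1)%g x.1, (c^-1)%g x.2))).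
- by move=> [x1 x2] /=; rewrite !permK.
- by move=> [x1 x2] /=; rewrite !permKV.
- by move=> [x1 x2] [y1 y2]; rewrite !rookE /= !(inj_eq perm_inj).
- by rewrite /u0 /= r0 /c tpermL; case: (u).
- by rewrite /v0 /= rm /c tpermL e; case: (v).
Qed.
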